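(* Let $P_1,P_2,P_3$ be points on a circle of radius $R$, and let $P_1',P_2',P_3'$ be points in $\mathbb R^2$ with $\|P_j'-P_k'\|\ge d$ for $j\ne k$, for some $d>0$, and $\|P_j-P_j'\|\le\delta$ for $j=1,2,3$, where $\delta\ge 0$. If $$\delta<\frac{d^2}{2\left(R+d+\sqrt{(R+d)^2-d^2}\right)},$$ then the points $P_1',P_2',P_3'$ are not collinear. *)

(* Defs.v *)
From Stdlib Require Import Reals.
Open Scope R_scope.

Definition pt := (R * R)%type.

Definition dist2 (p q : pt) : R :=
  sqrt ((fst p - fst q)^2 + (snd p - snd q)^2).

Definition on_circle (c : pt) (r : R) (p : pt) : Prop := dist2 p c = r.

Definition collinear (a b c : pt) : Prop :=
  (fst b - fst a) * (snd c - snd a) - (snd b - snd a) * (fst c - fst a) = 0.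

(* Main.v *)
Require Import Defs.
From Stdlib Require Import Reals Lra Psatz.
Open Scope R_scope.

Lemma sq_le_abs (x e : R) : 0 <= e -> x^2 <= e^2 -> -e <= x <= e.
Proof. intros. split; nra. Qed.

Lemma rot (x y u1 u2 : R) : u1^2+u2^2 = 1 ->
  (x*u1+y*u2)^2 + (-x*u2+y*u1)^2 = x^2+y^2.
Proof. intros H. replace (x^2+y^2) with ((x^2+y^2)*(u1^2+u2^2)) by (rewrite H; ring). ring. Qed.

Lemma core (cx cy p1x p1y p2x p2y p3x p3y q2x q2y u1 u2 a b R d dl : R) :
  u1^2 + u2^2 = 1 -> d <= a -> d <= b -> 2*dl < d -> 0 <= dl -> 0 < R ->
  (p1x-cx)^2+(p1y-cy)^2 = R^2 ->
  (p2x-cx)^2+(p2y-cy)^2 = R^2 ->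
  (p3x-cx)^2+(p3y-cy)^2 = R^2 ->
  (p1x - (q2x - a*u1))^2 + (p1y - (q2y - a*u2))^2 <= dl^2 ->
  (p2x - q2x)^2 + (p2y - q2y)^2 <= dl^2 ->
  (p3x - (q2x + b*u1))^2 + (p3y - (q2y + b*u2))^2 <= dl^2 ->
  (d - 2*dl)^2 <= 4*R*dl.
Proof.
  intros Hu Ha Hb Hd Hdl HR C1 C2 C3 D1 D2 D3.
  set (X1 := (p1x-cx)*u1 + (p1y-cy)*u2).
  set (X2 := (p2x-cx)*u1 + (p2y-cy)*u2).
  set (X3 := (p3x-cx)*u1 + (p3y-cy)*u2).
  set (W1 := -(p1x-cx)*u2 + (p1y-cy)*u1).
  set (W2 := -(p2x-cx)*u2 + (p2y-cy)*u1).
  set (W3 := -(p3x-cx)*u2 + (p3y-cy)*u1).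
  assert (E1 : X1^2 + W1^2 = R^2).
  { rewrite <- C1. unfold X1, W1. apply rot; exact Hu. }
  assert (E2 : X2^2 + W2^2 = R^2).
  { rewrite <- C2. unfold X2, W2. apply rot; exact Hu. }
  assert (E3 : X3^2 + W3^2 = R^2).
  { rewrite <- C3. unfold X3, W3. apply rot; exact Hu. }
  set (s1 := (p1x - (q2x - a*u1))*u1 + (p1y - (q2y - a*u2))*u2).
  set (t1 := -(p1x - (q2x - a*u1))*u2 + (p1y - (q2y - a*u2))*u1).
  set (s2 := (p2x - q2x)*u1 + (p2y - q2y)*u2).
  set (t2 := -(p2x - q2x)*u2 + (p2y - q2y)*u1).
  set (s3 := (p3x - (q2x + b*u1))*u1 + (p3y - (q2y + b*u2))*u2).
  set (t3 := -(p3x - (q2x + b*u1))*u2 + (p3y - (q2y + b*u2))*u1).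
  assert (F1 : s1^2 + t1^2 <= dl^2).
  { eapply Rle_trans; [|exact D1]. right. unfold s1,t1. apply rot; exact Hu. }
  assert (F2 : s2^2 + t2^2 <= dl^2).
  { eapply Rle_trans; [|exact D2]. right. unfold s2,t2. apply rot; exact Hu. }
  assert (F3 : s3^2 + t3^2 <= dl^2).
  { eapply Rle_trans; [|exact D3]. right. unfold s3,t3. apply rot; exact Hu. }
  assert (Bs1 := sq_le_abs s1 dl Hdl ltac:(nra)).
  assert (Bt1 := sq_le_abs t1 dl Hdl ltac:(nra)).
  assert (Bs2 := sq_le_abs s2 dl Hdl ltac:(nra)).
  assert (Bt2 := sq_le_abs t2 dl Hdl ltac:(nra)).
  assert (Bs3 := sq_le_abs s3 dl Hdl ltac:(nra)).
  assert (Bt3 := sq_le_abs t3 dl Hdl ltac:(nra)).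
  set (k := (q2x-cx)*u1 + (q2y-cy)*u2).
  set (m := -(q2x-cx)*u2 + (q2y-cy)*u1).
  assert (HX1 : X1 = k - a + s1).
  { transitivity (k - a*(u1^2+u2^2) + s1); [unfold X1, k, s1; ring | rewrite Hu; ring]. }
  assert (HX2 : X2 = k + s2). { unfold X2, k, s2. ring. }
  assert (HX3 : X3 = k + b + s3).
  { transitivity (k + b*(u1^2+u2^2) + s3); [unfold X3, k, s3; ring | rewrite Hu; ring]. }
  assert (HW1 : W1 = m + t1). { unfold W1, m, t1. ring. }
  assert (HW2 : W2 = m + t2). { unfold W2, m, t2. ring. }
  assert (HW3 : W3 = m + t3). { unfold W3, m, t3. ring. }
  set (al := X3 - X2). set (be := X2 - X1).
  assert (Hal : d - 2*dl <= al) by (unfold al; lra).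
  assert (Hbe : d - 2*dl <= be) by (unfold be; lra).
  assert (Id : al*be*(al+be) = al*(W2^2 - W1^2) + be*(W2^2 - W3^2)).
  { assert (al*be*(al+be) = al*X1^2 - (al+be)*X2^2 + be*X3^2) by (unfold al, be; ring).
    rewrite H. assert (X1^2 = R^2 - W1^2) by lra. assert (X2^2 = R^2 - W2^2) by lra.
    assert (X3^2 = R^2 - W3^2) by lra. rewrite H0, H1, H2. ring. }
  assert (Wb1 := sq_le_abs W1 R ltac:(lra) ltac:(nra)).
  assert (Wb2 := sq_le_abs W2 R ltac:(lra) ltac:(nra)).
  assert (Wb3 := sq_le_abs W3 R ltac:(lra) ltac:(nra)).
  assert (G1 : W2^2 - W1^2 <= 4*R*dl).
  { replace (W2^2 - W1^2) with ((t2 - t1)*(W2+W1)) by (rewrite HW1, HW2; ring).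
    assert (-(2*dl) <= t2 - t1 <= 2*dl) by lra.
    assert (-(2*R) <= W2 + W1 <= 2*R) by lra. nra. }
  assert (G3 : W2^2 - W3^2 <= 4*R*dl).
  { replace (W2^2 - W3^2) with ((t2 - t3)*(W2+W3)) by (rewrite HW3, HW2; ring).
    assert (-(2*dl) <= t2 - t3 <= 2*dl) by lra.
    assert (-(2*R) <= W2 + W3 <= 2*R) by lra. nra. }
  assert (P : al*be*(al+be) <= 4*R*dl*(al+be)).
  { rewrite Id. assert (0 < al) by lra. assert (0 < be) by lra. nra. }
  assert (Q : al*be <= 4*R*dl).
  { assert (0 < al+be) by lra. nra. }
  assert (0 < d - 2*dl) by lra. nra.
Qed.

Lemma final (R d dl : R) : 0 < R -> 0 < d -> 0 <= dl ->
  dl < d ^ 2 / (2 * (R + d + sqrt ((R + d) ^ 2 - d ^ 2))) ->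
  2*dl < d /\ 4*R*dl < (d - 2*dl)^2.
Proof.
  intros HR Hd Hdl H.
  set (S := sqrt ((R + d) ^ 2 - d ^ 2)) in *.
  assert (HS0 : 0 <= S) by apply sqrt_pos.
  assert (HS2 : S*S = (R+d)^2 - d^2) by (apply sqrt_sqrt; nra).
  assert (Hpos : 0 < 2 * (R + d + S)) by lra.
  assert (Ht : 2*dl*(R+d+S) < d^2).
  { apply (Rmult_lt_compat_r (2 * (R + d + S))) in H; [|exact Hpos].
    unfold Rdiv in H. rewrite Rmult_assoc, Rinv_l in H by lra. lra. }
  assert (HRS : R < S) by nra.
  assert (Hst : 2*dl < R + d - S).
  { assert ((R+d-S)*(R+d+S) = d^2) by nra. nra. }
  split. lra.
  assert (S^2 < (R+d-2*dl)^2) by nra. nra.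
Qed.

Lemma sq_of_le (x dl : R) : 0 <= x -> 0 <= dl -> sqrt x <= dl -> x <= dl^2.
Proof. intros. rewrite <- (sqrt_sqrt x) by lra. assert (0 <= sqrt x) by apply sqrt_pos. nra. Qed.

Lemma sq_of_ge (x d : R) : 0 <= x -> 0 < d -> d <= sqrt x -> d^2 <= x.
Proof. intros. rewrite <- (sqrt_sqrt x) by lra. nra. Qed.

Lemma sq_of_eq (x r : R) : 0 <= x -> sqrt x = r -> x = r^2.
Proof. intros. rewrite <- (sqrt_sqrt x) by lra. rewrite H0. ring. Qed.

Lemma core' (cx cy p1x p1y p2x p2y p3x p3y q1x q1y q2x q2y q3x q3y u1 u2 a b R d dl : R) :
  u1^2 + u2^2 = 1 -> d <= a -> d <= b -> 2*dl < d -> 0 <= dl -> 0 < R ->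
  q1x = q2x - a*u1 -> q1y = q2y - a*u2 -> q3x = q2x + b*u1 -> q3y = q2y + b*u2 ->
  (p1x-cx)^2+(p1y-cy)^2 = R^2 ->
  (p2x-cx)^2+(p2y-cy)^2 = R^2 ->
  (p3x-cx)^2+(p3y-cy)^2 = R^2 ->
  (p1x - q1x)^2 + (p1y - q1y)^2 <= dl^2 ->
  (p2x - q2x)^2 + (p2y - q2y)^2 <= dl^2 ->
  (p3x - q3x)^2 + (p3y - q3y)^2 <= dl^2 ->
  (d - 2*dl)^2 <= 4*R*dl.
Proof. intros. subst. apply (core cx cy p1x p1y p2x p2y p3x p3y q2x q2y u1 u2 a b R d dl); assumption. Qed.

Lemma sumsq_nn (x y : R) : 0 <= x^2 + y^2.
Proof. nra. Qed.

Theorem lemma7p4 (c : pt) (Rad d delta : R) (P1 P2 P3 Q1 Q2 Q3 : pt) :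
  0 < Rad ->
  on_circle c Rad P1 -> on_circle c Rad P2 -> on_circle c Rad P3 ->
  0 < d ->
  d <= dist2 Q1 Q2 -> d <= dist2 Q1 Q3 -> d <= dist2 Q2 Q3 ->
  0 <= delta ->
  dist2 P1 Q1 <= delta -> dist2 P2 Q2 <= delta -> dist2 P3 Q3 <= delta ->
  delta < d ^ 2 / (2 * (Rad + d + sqrt ((Rad + d) ^ 2 - d ^ 2))) ->
  ~ collinear Q1 Q2 Q3.
Proof.
  intros HR C1 C2 C3 Hd D12 D13 D23 Hdl E1 E2 E3 Hb Hcol.
  destruct (final Rad d delta HR Hd Hdl Hb) as [H2d Hfin].
  destruct c as [cx cy], P1 as [p1x p1y], P2 as [p2x p2y], P3 as [p3x p3y],
    Q1 as [q1x q1y], Q2 as [q2x q2y], Q3 as [q3x q3y].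
  unfold on_circle, dist2, collinear in *; simpl in *.
  apply sq_of_eq in C1; [|apply sumsq_nn].
  apply sq_of_eq in C2; [|apply sumsq_nn].
  apply sq_of_eq in C3; [|apply sumsq_nn].
  apply sq_of_ge in D12; [|apply sumsq_nn|lra].
  apply sq_of_ge in D13; [|apply sumsq_nn|lra].
  apply sq_of_ge in D23; [|apply sumsq_nn|lra].
  apply sq_of_le in E1; [|apply sumsq_nn|lra].
  apply sq_of_le in E2; [|apply sumsq_nn|lra].
  apply sq_of_le in E3; [|apply sumsq_nn|lra].
  set (v1 := q2x - q1x) in *. set (v2 := q2y - q1y) in *.
  set (L := v1^2 + v2^2).
  assert (HL : d^2 <= L) by (unfold L, v1, v2; nra).
  assert (HL0 : 0 < L) by nra.
  set (sL := sqrt L).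
  assert (HsL : sL * sL = L) by (apply sqrt_sqrt; lra).
  assert (HsL0 : 0 < sL) by (apply sqrt_lt_R0; lra).
  assert (HdsL : d <= sL) by nra.
  set (u1 := v1 / sL). set (u2 := v2 / sL).
  assert (Hu1 : v1 = sL * u1) by (unfold u1; field; lra).
  assert (Hu2 : v2 = sL * u2) by (unfold u2; field; lra).
  assert (Hu : u1^2 + u2^2 = 1).
  { apply (Rmult_eq_reg_l L); [|lra]. rewrite <- HsL at 1.
    transitivity ((sL*u1)^2 + (sL*u2)^2); [ring|]. rewrite <- Hu1, <- Hu2. fold L. ring. }
  set (k := ((q3x - q1x)*v1 + (q3y - q1y)*v2) / L).
  assert (Lk : L * k = (q3x - q1x)*v1 + (q3y - q1y)*v2) by (unfold k; field; lra).
  assert (Hk1 : q3x = q1x + k * v1).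
  { apply (Rmult_eq_reg_l L); [|lra].
    rewrite Rmult_plus_distr_l, <- Rmult_assoc, Lk. unfold L.
    assert (E : (v1 ^ 2 + v2 ^ 2) * q3x - ((v1 ^ 2 + v2 ^ 2) * q1x + ((q3x - q1x) * v1 + (q3y - q1y) * v2) * v1)
              = - v2 * (v1 * (q3y - q1y) - v2 * (q3x - q1x))) by ring.
    rewrite Hcol in E. lra. }
  assert (Hk2 : q3y = q1y + k * v2).
  { apply (Rmult_eq_reg_l L); [|lra].
    rewrite Rmult_plus_distr_l, <- Rmult_assoc, Lk. unfold L.
    assert (E : (v1 ^ 2 + v2 ^ 2) * q3y - ((v1 ^ 2 + v2 ^ 2) * q1y + ((q3x - q1x) * v1 + (q3y - q1y) * v2) * v2)
              = v1 * (v1 * (q3y - q1y) - v2 * (q3x - q1x))) by ring.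
    rewrite Hcol in E. lra. }
  clearbody k.
  assert (Hq2x : q2x = q1x + v1) by (unfold v1; ring).
  assert (Hq2y : q2y = q1y + v2) by (unfold v2; ring).
  clearbody v1 v2 u1 u2 sL.
  assert (N12 : (q1x - q2x)^2 + (q1y - q2y)^2 = sL^2).
  { rewrite Hq2x, Hq2y, Hu1, Hu2.
    transitivity (sL^2 * (u1^2+u2^2)); [ring|rewrite Hu; ring]. }
  assert (N13 : (q1x - q3x)^2 + (q1y - q3y)^2 = (k*sL)^2).
  { rewrite Hk1, Hk2, Hu1, Hu2.
    transitivity ((k*sL)^2 * (u1^2+u2^2)); [ring|rewrite Hu; ring]. }
  assert (N23 : (q2x - q3x)^2 + (q2y - q3y)^2 = ((k-1)*sL)^2).
  { rewrite Hk1, Hk2, Hq2x, Hq2y, Hu1, Hu2.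
    transitivity (((k-1)*sL)^2 * (u1^2+u2^2)); [ring|rewrite Hu; ring]. }
  assert (Aux : forall c, 0 < c -> d^2 <= (c*sL)^2 -> d <= c*sL).
  { intros c0 Hc0 Hc. assert (0 < c0*sL) by nra. nra. }
  assert (C1' : (p1x - cx) ^ 2 + (p1y - cy) ^ 2 = Rad^2) by exact C1.
  destruct (Rtotal_order k 1) as [Hk|[Hk|Hk]].
  - destruct (Rtotal_order k 0) as [Hk'|[Hk'|Hk']].
    + (* Q1 middle: order Q3, Q1, Q2 *)
      assert (Ha : d <= (-k)*sL) by (apply Aux; [lra|]; replace ((-k*sL)^2) with ((k*sL)^2) by ring; lra).
      assert (X := core' cx cy p3x p3y p1x p1y p2x p2y q3x q3y q1x q1y q2x q2y u1 u2
                    ((-k)*sL) sL Rad d delta Hu Ha HdsL H2d Hdl HR).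
      assert ((d - 2*delta)^2 <= 4*Rad*delta); [|lra].
      apply X; auto.
      * rewrite Hk1, Hu1; ring.
      * rewrite Hk2, Hu2; ring.
      * rewrite Hq2x, Hu1; ring.
      * rewrite Hq2y, Hu2; ring.
    + subst k. nra.
    + (* Q3 middle: order Q1, Q3, Q2 *)
      assert (Ha : d <= k*sL) by (apply Aux; lra).
      assert (Hb' : d <= (1-k)*sL) by (apply Aux; [lra|]; replace (((1-k)*sL)^2) with (((k-1)*sL)^2) by ring; lra).
      assert (X := core' cx cy p1x p1y p3x p3y p2x p2y q1x q1y q3x q3y q2x q2y u1 u2
                    (k*sL) ((1-k)*sL) Rad d delta Hu Ha Hb' H2d Hdl HR).
      assert ((d - 2*delta)^2 <= 4*Rad*delta); [|lra].
      apply X; auto.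
      * rewrite Hk1, Hu1; ring.
      * rewrite Hk2, Hu2; ring.
      * rewrite Hk1, Hq2x, Hu1; ring.
      * rewrite Hk2, Hq2y, Hu2; ring.
  - subst k. nra.
  - (* Q2 middle: order Q1, Q2, Q3 *)
    assert (Hb' : d <= (k-1)*sL) by (apply Aux; lra).
    assert (X := core' cx cy p1x p1y p2x p2y p3x p3y q1x q1y q2x q2y q3x q3y u1 u2
                  sL ((k-1)*sL) Rad d delta Hu HdsL Hb' H2d Hdl HR).
    assert ((d - 2*delta)^2 <= 4*Rad*delta); [|lra].
    apply X; auto.
    * rewrite Hq2x, Hu1; ring.
    * rewrite Hq2y, Hu2; ring.
    * rewrite Hk1, Hq2x, Hu1; ring.
    * rewrite Hk2, Hq2y, Hu2; ring.
Qed.
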